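(* Let $P,Q\in\Gamma_n$ and $0<r\le R$ with $r\le p_i/q_i\le R$ for all $i$. Let $s,t\in\mathbb{R}$. If $s\ge-1$ and $t\ge-1$, then $$r^{t+1}\Big(\frac{r+1}{2}\Big)^{s-t}\Omega_t(P\|Q)\le\Omega_s(Q\|P)\le R^{t+1}\Big(\frac{R+1}{2}\Big)^{s-t}\Omega_t(P\|Q).$$ If $s\le-1$ and $t\le-1$, then $$R^{t+1}\Big(\frac{R+1}{2}\Big)^{s-t}\Omega_t(P\|Q)\le\Omega_s(Q\|P)\le r^{t+1}\Big(\frac{r+1}{2}\Big)^{s-t}\Omega_t(P\|Q).$$
   Context: $\Gamma_n=\{P=(p_1,\dots,p_n): p_i>0,\ \sum_i p_i=1\}$, $n\ge2$. For $P,Q\in\Gamma_n$ and $s\in\mathbb{R}$: $\Omega_s(P\|Q)=[s(s-1)]^{-1}\big[\sum_i p_i\big(\frac{p_i+q_i}{2p_i}\big)^s-1\big]$ for $s\ne0,1$; $\Omega_0(P\|Q)=\sum_i p_i\ln\frac{2p_i}{p_i+q_i}$; $\Omega_1(P\|Q)=\sum_i\frac{p_i+q_i}{2}\ln\frac{p_i+q_i}{2p_i}$. $\Omega_s(Q\|P)$ is obtained by interchanging $p_i$ and $q_i$ in these formulas. *)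

(* Defs.v *)
From HB Require Import structures.
From mathcomp Require Import all_boot all_order all_algebra.
From mathcomp Require Import all_classical all_reals all_analysis.
Set Implicit Arguments. Unset Strict Implicit. Unset Printing Implicit Defensive.
Import Order.TTheory GRing.Theory Num.Theory.
Local Open Scope ring_scope.

Definition in_Gamma (R : realType) (n : nat) (p : 'I_n -> R) : Prop :=
  (forall i, 0 < p i) /\ \sum_(i < n) p i = 1.

Definition Omega (R : realType) (n : nat) (s : R) (p q : 'I_n -> R) : R :=
  if s == 0 then \sum_(i < n) p i * ln (2 * p i / (p i + q i))
  else if s == 1 then \sum_(i < n) (p i + q i) / 2 * ln ((p i + q i) / (2 * p i))
  else (s * (s - 1))^-1 *
       (\sum_(i < n) p i * powR ((p i + q i) / (2 * p i)) s - 1).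

(* Main.v *)
Require Import Defs.
From HB Require Import structures.
From mathcomp Require Import all_boot all_order all_algebra.
From mathcomp Require Import all_classical all_reals all_analysis.
From mathcomp Require Import ring lra.
Import Order.TTheory GRing.Theory Num.Theory.
Local Open Scope ring_scope.
Set Implicit Arguments. Unset Strict Implicit.
Import numFieldNormedType.Exports.
Local Open Scope classical_set_scope.

Section Aux.
Variable R : realType.
Implicit Types (f g : R -> R) (x a b : R).

Lemma dM f g x a b : is_derive x 1 f a -> is_derive x 1 g b ->
  is_derive x 1 (fun y => f y * g y) (f x * b + g x * a).
Proof. move=> ha hb; exact: (is_deriveM ha hb). Qed.

Lemma dD f g x a b : is_derive x 1 f a -> is_derive x 1 g b ->
  is_derive x 1 (fun y => f y + g y) (a + b).
Proof. move=> ha hb; exact: (is_deriveD ha hb). Qed.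

Lemma dN f x a : is_derive x 1 f a -> is_derive x 1 (fun y => - f y) (- a).
Proof. move=> ha; exact: (is_deriveN ha). Qed.

Lemma dC x (c : R) : is_derive x 1 (fun _ : R => c) 0.
Proof. exact: (@is_derive_cst R R^o R^o c x 1). Qed.

Lemma dI x : is_derive x 1 (fun y : R => y) 1.
Proof. exact: is_derive_id. Qed.

Lemma dV f x a : f x != 0 -> is_derive x 1 f a ->
  is_derive x 1 (fun y => (f y)^-1) (- (f x ^+ 2)^-1 * a).
Proof.
move=> fx [df <-]; apply: DeriveDef; first exact: derivableV.
by rewrite deriveV.
Qed.

Lemma dcomp f g x a b : is_derive x 1 f a -> is_derive (f x) 1 g b ->
  is_derive x 1 (fun y => g (f y)) (b * a).
Proof.
move=> [df <-] [dg <-]; apply: DeriveDef.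
  by apply/derivable1_diffP; apply: differentiable_comp; apply/derivable1_diffP.
have := derive1_comp df dg; rewrite !derive1E => <-. by [].
Qed.

Lemma deq f x a b : is_derive x 1 f a -> a = b -> is_derive x 1 f b.
Proof. by move=> h <-. Qed.

Lemma dln x : 0 < x -> is_derive x 1 (fun y => ln y) x^-1.
Proof. move=> x0; exact: is_derive1_ln. Qed.

Lemma dpow x e : 0 < x -> is_derive x 1 (fun y => powR y e) (e * powR x (e - 1)).
Proof. move=> x0; exact: is_derive1_powR. Qed.


Definition phi (s : R) : R -> R :=
  if s == 0 then (fun u => - ln u)
  else if s == 1 then (fun u => u * ln u)
  else (fun u => (powR u s - 1) / (s * (s - 1))).

Definition dphi (s : R) : R -> R :=
  if s == 0 then (fun u => - u^-1)
  else if s == 1 then (fun u => ln u + 1)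
  else (fun u => powR u (s - 1) / (s - 1)).

Lemma phi_d (s u : R) : 0 < u -> is_derive u 1 (phi s) (dphi s u).
Proof.
move=> u0; rewrite /phi /dphi; case: eqP => [_|s0].
  apply: dN. exact: dln u0.

case: eqP => [_|s1].
  apply: (deq (dM (dI u) (dln u0))).
  by rewrite mulfV ?gt_eqF // mulr1 addrC.
apply: (deq (dM (dD (dpow s u0) (dC u (-1))) (dC u (s * (s - 1))^-1))).
have hs : s != 0 by apply/eqP.
have hs1 : s - 1 != 0 by rewrite subr_eq0; apply/eqP.
by rewrite mulr0 add0r addr0; field; rewrite hs hs1.
Qed.

Lemma dphi_d (s u : R) : 0 < u -> is_derive u 1 (dphi s) (powR u (s - 2)).
Proof.
move=> u0; rewrite /dphi; case: eqP => [->|s0].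
  have h := dN (dV (f := fun y : R => y) (x := u) (lt0r_neq0 u0) (dI u)). apply: deq h _.
  by rewrite mulr1 opprK sub0r (powR_invn 2 (ltW u0)).
case: eqP => [->|s1].
  apply: (deq (dD (dln u0) (dC u 1))).
  have -> : (1 - 2 : R) = -1 by lra.
  by rewrite powR_inv1 ?(ltW u0) // addr0.
apply: (deq (dM (dpow (s - 1) u0) (dC u (s - 1)^-1))).
have hs1 : s - 1 != 0 by rewrite subr_eq0; apply/eqP.
rewrite mulr0 add0r (_ : s - 1 - 1 = s - 2); last by lra.
by field.
Qed.

Lemma tangent (f df ddf : R -> R) (a b c x : R) : 0 < a -> a <= c <= b -> a <= x <= b ->
  (forall y : R, 0 < y -> is_derive y 1 f (df y)) ->
  (forall y : R, 0 < y -> is_derive y 1 df (ddf y)) ->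
  (forall y : R, a <= y <= b -> 0 <= ddf y) -> f c + df c * (x - c) <= f x.
Proof.
move=> a0 /andP[ac cb] /andP[ax xb] hf hdf hdd.
have cont g dg u v : a <= u -> (forall y : R, 0 < y -> is_derive y 1 g (dg y)) ->
    {within `[u, v], continuous g}.
  move=> au hg; apply: derivable_within_continuous => y; rewrite in_itv /= => /andP[uy _].
  have y0 : 0 < y by lra.
  by have [] := hg y y0.
have der g dg u v : a <= u -> (forall y : R, 0 < y -> is_derive y 1 g (dg y)) ->
    forall y, y \in `]u, v[%R -> is_derive y 1 g (dg y).
  move=> au hg y; rewrite in_itv /= => /andP[uy _]; apply: hg; lra.
case: (lerP c x) => [cx|xc].
  have [z /[1!in_itv] /= /andP[cz zx] ez] := MVT_segment cx (der _ _ _ _ ac hf) (cont _ _ _ _ ac hf).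
  have [w /[1!in_itv] /= /andP[cw wz] ew] := MVT_segment cz (der _ _ _ _ ac hdf) (cont _ _ _ _ ac hdf).
  have : 0 <= ddf w by apply: hdd; apply/andP; split; lra.
  move=> hw.
  have : 0 <= df z - df c by rewrite ew; apply: mulr_ge0 => //; lra.
  move=> hz.
  have : 0 <= (df z - df c) * (x - c) by apply: mulr_ge0 => //; lra.
  nra.
have xc' : x <= c by apply: ltW.
have [z /[1!in_itv] /= /andP[xz zc] ez] := MVT_segment xc' (der _ _ _ _ ax hf) (cont _ _ _ _ ax hf).
have az : a <= z by lra.
have [w /[1!in_itv] /= /andP[zw wc] ew] := MVT_segment zc (der _ _ _ _ az hdf) (cont _ _ _ _ az hdf).
have : 0 <= ddf w by apply: hdd; apply/andP; split; lra.
move=> hw.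
have : 0 <= df c - df z by rewrite ew; apply: mulr_ge0 => //; lra.
move=> hz.
have : 0 <= (df c - df z) * (c - x) by apply: mulr_ge0 => //; lra.
nra.
Qed.


Definition bb (y : R) := (y + 1) / (2 * y).

Lemma bb_gt0 (y : R) : 0 < y -> 0 < bb y.
Proof. move=> y0; rewrite /bb; apply: divr_gt0; lra. Qed.

Lemma dbb (x : R) : 0 < x -> is_derive x 1 bb (- (2 * x ^+ 2)^-1).
Proof.
move=> x0.
have h2 : 2 * x != 0 by apply: lt0r_neq0; lra.
have := dM (dD (dI x) (dC x 1)) (dV (f := fun y => 2 * y) h2 (dM (dC x 2) (dI x))).
move=> h; apply: deq h _.
have hx : x != 0 by apply: lt0r_neq0.
rewrite /=; field; rewrite hx //.
Qed.

Lemma dhalf (x : R) : is_derive x 1 (fun y => (y + 1) / 2) 2^-1.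
Proof.
apply: deq (dM (dD (dI x) (dC x 1)) (dC x 2^-1)) _.
by rewrite mulr0 add0r addr0 mulr1.
Qed.

Definition GG s (y : R) := phi s ((y + 1) / 2).
Definition dGG s (y : R) := dphi s ((y + 1) / 2) / 2.
Definition ddGG s (y : R) := powR ((y + 1) / 2) (s - 2) / 4.
Definition FF t (y : R) := y * phi t (bb y).
Definition dFF t (y : R) := phi t (bb y) - dphi t (bb y) / (2 * y).
Definition ddFF t (y : R) := powR (bb y) (t - 2) / (4 * y ^+ 3).

Lemma GG_d s (x : R) : 0 < x -> is_derive x 1 (GG s) (dGG s x).
Proof.
move=> x0; have hp : 0 < (x + 1) / 2 by lra.
apply: deq (dcomp (dhalf x) (phi_d s hp)) _.
by rewrite /dGG.
Qed.

Lemma dGG_d s (x : R) : 0 < x -> is_derive x 1 (dGG s) (ddGG s x).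
Proof.
move=> x0; have hp : 0 < (x + 1) / 2 by lra.
apply: deq (dM (dcomp (dhalf x) (dphi_d s hp)) (dC x 2^-1)) _.
rewrite /ddGG mulr0 add0r; by field.
Qed.

Lemma FF_d t (x : R) : 0 < x -> is_derive x 1 (FF t) (dFF t x).
Proof.
move=> x0.
apply: deq (dM (dI x) (dcomp (dbb x0) (phi_d t (bb_gt0 x0)))) _.
have hx : x != 0 by apply: lt0r_neq0.
rewrite /dFF; field; rewrite hx //.
Qed.

Lemma dFF_d t (x : R) : 0 < x -> is_derive x 1 (dFF t) (ddFF t x).
Proof.
move=> x0.
have h2 : 2 * x != 0 by apply: lt0r_neq0; lra.
have hx : x != 0 by apply: lt0r_neq0.
apply: deq (dD (dcomp (dbb x0) (phi_d t (bb_gt0 x0)))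
   (dN (dM (dcomp (dbb x0) (dphi_d t (bb_gt0 x0)))
        (dV (f := fun y => 2 * y) h2 (dM (dC x 2) (dI x)))))) _.
rewrite /ddFF /=; field; rewrite hx //.
Qed.


Lemma phi1 s : phi s 1 = 0.
Proof.
rewrite /phi; case: eqP => _; first by rewrite ln1 oppr0.
case: eqP => _; first by rewrite ln1 mulr0.
by rewrite powR1 subrr mul0r.
Qed.

Lemma sum_tan n (p q : 'I_n -> R) (H dH ddH : R -> R) (r Rb : R) :
  in_Gamma p -> in_Gamma q -> 0 < r -> (forall i, r <= p i / q i <= Rb) ->
  r <= 1 <= Rb ->
  (forall y : R, 0 < y -> is_derive y 1 H (dH y)) ->
  (forall y : R, 0 < y -> is_derive y 1 dH (ddH y)) ->
  (forall y : R, r <= y <= Rb -> 0 <= ddH y) -> H 1 = 0 ->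
  0 <= \sum_(i < n) q i * H (p i / q i).
Proof.
move=> [p0 ps] [q0 qs] r0 hx h1 hH hdH hdd H1.
have e : \sum_(i < n) q i * (H 1 + dH 1 * (p i / q i - 1)) = 0.
  transitivity (dH 1 * (\sum_(i < n) p i - \sum_(i < n) q i)); last first.
    by rewrite ps qs subrr mulr0.
  rewrite -sumrB mulr_sumr; apply: eq_bigr => i _.
  have := q0 i => qi; rewrite H1 add0r; field; exact: lt0r_neq0.
rewrite -[X in X <= _]e; apply: ler_sum => i _; apply: ler_wpM2l; first exact: ltW.
exact: (tangent r0 h1 (hx i) hH hdH hdd).
Qed.


Lemma OmegaE n s (p q : 'I_n -> R) : in_Gamma p -> (forall i, 0 < q i) ->
  Omega s p q = \sum_(i < n) p i * phi s ((p i + q i) / (2 * p i)).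
Proof.
move=> [p0 ps] q0; rewrite /Omega /phi.
case: eqP => [_|s0].
  apply: eq_bigr => i _; congr (_ * _).
  have hp := p0 i; have hq := q0 i.
  have hpos : 0 < (p i + q i) / (2 * p i) by apply: divr_gt0; lra.
  by rewrite -lnV ?posrE // invf_div.
case: eqP => [_|s1].
  apply: eq_bigr => i _.
  have hp := p0 i; rewrite mulrA; congr (_ * _); field; exact: lt0r_neq0.
rewrite -[X in \sum_(i < n) _ - X]ps -sumrB mulr_sumr; apply: eq_bigr => i _.
by rewrite /=; ring.
Qed.

Definition LL s t (y : R) := (t + 1) * ln y + (s - t) * ln ((y + 1) / 2).

Lemma expR_ln3 (y : R) : 0 < y -> y ^+ 3 = expR (3 * ln y).
Proof.
move=> y0; rewrite mulr_natl -lnXn // lnK //.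
by rewrite posrE exprn_gt0.
Qed.

Lemma ddFF_eq s t (y : R) : 0 < y -> ddFF t y = expR (- LL s t y) * ddGG s y.
Proof.
move=> y0.
have hA : 0 < (y + 1) / 2 by lra.
have hb : bb y = ((y + 1) / 2) / y by rewrite /bb; field; apply: lt0r_neq0.
rewrite /ddFF /ddGG /LL /powR !gt_eqF ?bb_gt0 //.
rewrite hb lnM ?posrE ?invr_gt0 // lnV ?posrE // expR_ln3 //.
set lA := ln ((y + 1) / 2); set ly := ln y.
set Z := (t - 2) * lA - (t + 1) * ly.
rewrite (_ : (t - 2) * (lA + - ly) = Z + 3 * ly); last by rewrite /Z; ring.
rewrite (_ : (s - 2) * lA = Z + ((t + 1) * ly + (s - t) * lA)); last by rewrite /Z; ring.
rewrite [expR (Z + 3 * ly)]expRD [expR (Z + (_ + _))]expRD expRN.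
have := expR_gt0 ((t + 1) * ly + (s - t) * lA) => eW.
have := expR_gt0 (3 * ly) => e3.
field; rewrite !lt0r_neq0 //.
Qed.

Lemma powR_exp (a e : R) : 0 < a -> powR a e = expR (e * ln a).
Proof. by move=> a0; rewrite /powR gt_eqF. Qed.

Lemma m_eq s t (r : R) : 0 < r ->
  powR r (t + 1) * powR ((r + 1) / 2) (s - t) = expR (LL s t r).
Proof.
move=> r0; rewrite !powR_exp //; last by lra.
by rewrite -expRD.
Qed.

Lemma LL_incr s t (y z : R) : 0 < y -> y <= z -> -1 <= s -> -1 <= t -> LL s t y <= LL s t z.
Proof.
move=> y0 yz s1 t1.
have z0 : 0 < z by lra.
have hA : ln ((y + 1) / 2) <= ln ((z + 1) / 2).
  by rewrite ler_ln ?posrE; lra.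
have hD : ln y + ln ((z + 1) / 2) <= ln z + ln ((y + 1) / 2).
  rewrite -!lnM ?posrE; try lra.
  rewrite ler_ln ?posrE.
  - by rewrite !mulrA ler_pM2r ?invr_gt0 //; nra.
  - by apply: mulr_gt0 => //; lra.
  - by apply: mulr_gt0 => //; lra.
rewrite /LL; nra.
Qed.

Lemma LL_decr s t (y z : R) : 0 < y -> y <= z -> s <= -1 -> t <= -1 -> LL s t z <= LL s t y.
Proof.
move=> y0 yz s1 t1.
have z0 : 0 < z by lra.
have hA : ln ((y + 1) / 2) <= ln ((z + 1) / 2).
  by rewrite ler_ln ?posrE; lra.
have hD : ln y + ln ((z + 1) / 2) <= ln z + ln ((y + 1) / 2).
  rewrite -!lnM ?posrE; try lra.
  rewrite ler_ln ?posrE.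
  - by rewrite !mulrA ler_pM2r ?invr_gt0 //; nra.
  - by apply: mulr_gt0 => //; lra.
  - by apply: mulr_gt0 => //; lra.
rewrite /LL; nra.
Qed.


Lemma ddGG_gt0 s (y : R) : 0 < y -> 0 < ddGG s y.
Proof. move=> y0; rewrite /ddGG; apply: divr_gt0 => //; apply: powR_gt0; lra. Qed.

Lemma cmp_lo s t M0 (y : R) : 0 < y -> M0 <= LL s t y -> expR M0 * ddFF t y <= ddGG s y.
Proof.
move=> y0 hM; rewrite (ddFF_eq s) // mulrA -expRD.
rewrite -[leRHS]mul1r ler_pM2r ?ddGG_gt0 //.
by rewrite -expR0 ler_expR; lra.
Qed.

Lemma cmp_hi s t M0 (y : R) : 0 < y -> LL s t y <= M0 -> ddGG s y <= expR M0 * ddFF t y.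
Proof.
move=> y0 hM; rewrite (ddFF_eq s) // mulrA -expRD.
rewrite -[leLHS]mul1r ler_pM2r ?ddGG_gt0 //.
by rewrite -expR0 ler_expR; lra.
Qed.

Lemma Om_s n s (p q : 'I_n -> R) : in_Gamma p -> in_Gamma q ->
  Omega s q p = \sum_(i < n) q i * GG s (p i / q i).
Proof.
move=> hp hq; rewrite (OmegaE s hq hp.1); apply: eq_bigr => i _.
rewrite /GG; congr (_ * phi s _).
have := hq.1 i => q0; field; exact: lt0r_neq0.
Qed.

Lemma Om_t n t (p q : 'I_n -> R) : in_Gamma p -> in_Gamma q ->
  Omega t p q = \sum_(i < n) q i * FF t (p i / q i).
Proof.
move=> hp hq; rewrite (OmegaE t hp hq.1); apply: eq_bigr => i _.
have := hq.1 i => q0; have := hp.1 i => p0.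
rewrite /FF /bb mulrA (_ : q i * (p i / q i) = p i); last by field; exact: lt0r_neq0.
congr (_ * phi t _); field; rewrite !lt0r_neq0 //.
Qed.

Lemma lower n s t m r Rb (p q : 'I_n -> R) : in_Gamma p -> in_Gamma q -> 0 < r ->
  (forall i, r <= p i / q i <= Rb) -> r <= 1 <= Rb ->
  (forall y : R, r <= y <= Rb -> m * ddFF t y <= ddGG s y) ->
  m * Omega t p q <= Omega s q p.
Proof.
move=> hp hq r0 hx h1 hm.
have e : \sum_(i < n) q i * (GG s (p i / q i) - m * FF t (p i / q i)) =
    Omega s q p - m * Omega t p q.
  by rewrite (Om_s s hp hq) (Om_t t hp hq) mulr_sumr -sumrB; apply: eq_bigr => i _; ring.
rewrite -subr_ge0 -e.
apply: (@sum_tan n p q (fun y => GG s y - m * FF t y) (fun y => dGG s y - m * dFF t y)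
  (fun y => ddGG s y - m * ddFF t y) r Rb hp hq r0 hx h1).
- move=> y y0; apply: deq (dD (GG_d s y0) (dN (dM (dC y m) (FF_d t y0)))) _; ring.
- move=> y y0; apply: deq (dD (dGG_d s y0) (dN (dM (dC y m) (dFF_d t y0)))) _; ring.
- by move=> y hy; rewrite subr_ge0; apply: hm.
- have h2 : (1 + 1) / 2 = 1 :> R by field.
  have h3 : (1 + 1) / (2 * 1) = 1 :> R by field.
  by rewrite /= /GG /FF /bb h2 h3 !phi1; ring.
Qed.

Lemma upper n s t m r Rb (p q : 'I_n -> R) : in_Gamma p -> in_Gamma q -> 0 < r ->
  (forall i, r <= p i / q i <= Rb) -> r <= 1 <= Rb ->
  (forall y : R, r <= y <= Rb -> ddGG s y <= m * ddFF t y) ->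
  Omega s q p <= m * Omega t p q.
Proof.
move=> hp hq r0 hx h1 hm.
have e : \sum_(i < n) q i * (m * FF t (p i / q i) - GG s (p i / q i)) =
    m * Omega t p q - Omega s q p.
  by rewrite (Om_s s hp hq) (Om_t t hp hq) mulr_sumr -sumrB; apply: eq_bigr => i _; ring.
rewrite -subr_ge0 -e.
apply: (@sum_tan n p q (fun y => m * FF t y - GG s y) (fun y => m * dFF t y - dGG s y)
  (fun y => m * ddFF t y - ddGG s y) r Rb hp hq r0 hx h1).
- move=> y y0; apply: deq (dD (dM (dC y m) (FF_d t y0)) (dN (GG_d s y0))) _; ring.
- move=> y y0; apply: deq (dD (dM (dC y m) (dFF_d t y0)) (dN (dGG_d s y0))) _; ring.
- by move=> y hy; rewrite subr_ge0; apply: hm.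
- have h2 : (1 + 1) / 2 = 1 :> R by field.
  have h3 : (1 + 1) / (2 * 1) = 1 :> R by field.
  by rewrite /= /GG /FF /bb h2 h3 !phi1; ring.
Qed.

Lemma r_le1 n r Rb (p q : 'I_n -> R) : in_Gamma p -> in_Gamma q ->
  (forall i, r <= p i / q i <= Rb) -> r <= 1 <= Rb.
Proof.
move=> [p0 ps] [q0 qs] hx.
have e : forall i, p i = q i * (p i / q i).
  by move=> i; have := q0 i => qi; field; exact: lt0r_neq0.
apply/andP; split.
- rewrite -ps -[leLHS]mul1r -qs mulr_suml; apply: ler_sum => i _.
  rewrite e; apply: ler_wpM2l; [exact: ltW | by case/andP: (hx i)].
- rewrite -ps -[leRHS]mul1r -qs mulr_suml; apply: ler_sum => i _.
  rewrite e; apply: ler_wpM2l; [exact: ltW | by case/andP: (hx i)].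
Qed.

End Aux.

Theorem theorem4p1 (R : realType) (n : nat) (p q : 'I_n -> R) (r Rb s t : R) :
  (2 <= n)%N -> in_Gamma p -> in_Gamma q ->
  0 < r -> r <= Rb ->
  (forall i, r <= p i / q i <= Rb) ->
  ((-1 <= s -> -1 <= t ->
     powR r (t + 1) * powR ((r + 1) / 2) (s - t) * Omega t p q <= Omega s q p /\
     Omega s q p <= powR Rb (t + 1) * powR ((Rb + 1) / 2) (s - t) * Omega t p q) /\
   (s <= -1 -> t <= -1 ->
     powR Rb (t + 1) * powR ((Rb + 1) / 2) (s - t) * Omega t p q <= Omega s q p /\
     Omega s q p <= powR r (t + 1) * powR ((r + 1) / 2) (s - t) * Omega t p q)).
Proof.
move=> _ hp hq r0 rR hx.
have h1 := r_le1 hp hq hx.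
have R0 : 0 < Rb by lra.
rewrite !m_eq //.
split=> hs ht; split.
- apply: (lower hp hq r0 hx h1) => y /andP[ry yR].
  by apply: cmp_lo; [lra | apply: LL_incr].
- apply: (upper hp hq r0 hx h1) => y /andP[ry yR].
  by apply: cmp_hi; [lra | apply: LL_incr => //; lra].
- apply: (lower hp hq r0 hx h1) => y /andP[ry yR].
  by apply: cmp_lo; [lra | apply: LL_decr => //; lra].
- apply: (upper hp hq r0 hx h1) => y /andP[ry yR].
  by apply: cmp_hi; [lra | apply: LL_decr].
Qed.
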